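(* Let $C$ be a bialgebra over a commutative ring $\Bbbk$. The Lie algebra structure on $\mathrm{Cotor}^1_C(\Bbbk,\Bbbk)$ (the degree $1$ part of the Gerstenhaber algebra $\mathrm{Cotor}^*_C(\Bbbk,\Bbbk)$, with its degree $-1$ bracket) coincides with the Lie algebra $P(C)=\{x\in C:\Delta x=x\otimes 1+1\otimes x\}$ of primitive elements of $C$ with bracket $[x,y]=xy-yx$.
   Context: The Gerstenhaber structure on $\mathrm{Cotor}^*_C(\Bbbk,\Bbbk)$ is the one induced by the operad with multiplication $\mathcal{O}_C$: $\mathcal{O}_C(n)=C^{\otimes n}$, identity $1_C$, $(a_1\otimes\dots\otimes a_m)\circ_i(b_1\otimes\dots\otimes b_n)=a_1\otimes\dots\otimes a_{i-1}\otimes a_i^{(1)}b_1\otimes\dots\otimes a_i^{(n)}b_n\otimes a_{i+1}\otimes\dots\otimes a_m$ (with $\Delta^{n-1}(a_i)=a_i^{(1)}\otimes\dots\otimes a_i^{(n)}$), multiplication $1_C\otimes1_C$, $e=1\in\Bbbk$. For an operad with multiplication $(O,\mu,e)$ the cochain complex has $df=\mu\circ_2f+\sum_{i=1}^n(-1)^if\circ_i\mu+(-1)^{n+1}\mu\circ_1f$ on $O(n)$, and the bracket is $\{f,g\}=f\bar\circ g-(-1)^{(m-1)(n-1)}g\bar\circ f$, $f\bar\circ g=(-1)^{(m-1)(n-1)}\sum_{i=1}^m(-1)^{(n-1)(i-1)}f\circ_ig$ for $f\in O(m)$, $g\in O(n)$; it induces the bracket on cohomology. *)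

(* Defs.v *)
From HB Require Import structures.
From mathcomp Require Import all_boot all_algebra.
From mathcomp Require Import finmap monalg.

Set Implicit Arguments.
Unset Strict Implicit.
Unset Printing Implicit Defensive.

Import GRing.Theory.
Local Open Scope ring_scope.

(* A word [:: a1; ...; an] stands for a1 (x) ... (x) an in C^{(x)n};    *)
(* C^{(x)n} is the quotient of the length-n part of FT k C by the       *)
(* multilinearity relations (predicate [tnull] below).  Hence           *)
(* O_C(n) = C^{(x)n} is represented by elements of FT supported on      *)
(* words of length n ([homog n]) up to [teq].                           *)
Section Tensors.
Variables (k : comRingType) (C : algType k).

Definition FT := {malg k[seq C]}.

Definition tb (s : seq C) : FT := << s >>.

Definition lext (K : choiceType) (V : lmodType k) (g : K -> V)
  (f : {malg k[K]}) : V := \sum_(t <- msupp f) f@_t *: g t.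

Inductive tnull : FT -> Prop :=
| tnull_add (s1 s2 : seq C) (a b : C) :
    tnull (tb (s1 ++ (a + b) :: s2) - tb (s1 ++ a :: s2) - tb (s1 ++ b :: s2))
| tnull_scale (s1 s2 : seq C) (r : k) (a : C) :
    tnull (tb (s1 ++ (r *: a) :: s2) - r *: tb (s1 ++ a :: s2))
| tnull0 : tnull 0
| tnullD f g : tnull f -> tnull g -> tnull (f + g)
| tnullZ (r : k) f : tnull f -> tnull (r *: f).

Definition teq (f g : FT) : Prop := tnull (f - g).

Definition homog (n : nat) (f : FT) : Prop :=
  forall t, t \in msupp f -> size t = n.

(* elements of C (x) C are represented in the free module on pairs *)
Definition emb2 (g : {malg k[(C * C)%type]}) : FT :=
  lext (fun p : C * C => tb [:: p.1; p.2]) g.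

Record is_bialgebra (Delta : C -> {malg k[(C * C)%type]}) (eps : C -> k)
  : Prop := {
  eps_linear : forall (r : k) (a b : C), eps (r *: a + b) = r * eps a + eps b;
  eps_mul : forall a b : C, eps (a * b) = eps a * eps b;
  eps_one : eps 1 = 1;
  Delta_linear : forall (r : k) (a b : C),
    teq (emb2 (Delta (r *: a + b))) (r *: emb2 (Delta a) + emb2 (Delta b));
  Delta_coassoc : forall a : C,
    teq (lext (fun p : C * C =>
               lext (fun q : C * C => tb [:: q.1; q.2; p.2]) (Delta p.1))
              (Delta a))
        (lext (fun p : C * C =>
               lext (fun q : C * C => tb [:: p.1; q.1; q.2]) (Delta p.2))
              (Delta a));
  Delta_counitl : forall a : C,
    lext (fun p : C * C => eps p.1 *: p.2) (Delta a) = a;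
  Delta_counitr : forall a : C,
    lext (fun p : C * C => eps p.2 *: p.1) (Delta a) = a;
  Delta_mul : forall a b : C,
    teq (emb2 (Delta (a * b)))
        (lext (fun p : C * C =>
               lext (fun q : C * C => tb [:: p.1 * q.1; p.2 * q.2]) (Delta b))
              (Delta a));
  Delta_one : teq (emb2 (Delta 1)) (tb [:: 1; 1])
}.

Definition primitive (Delta : C -> {malg k[(C * C)%type]}) (x : C) : Prop :=
  teq (emb2 (Delta x)) (tb [:: x; 1] + tb [:: 1; x]).

Section Operad.
Variables (Delta : C -> {malg k[(C * C)%type]}) (eps : C -> k).

(* iterated coproduct Delta^{n-1} : C -> C^{(x)n}, with Delta^{-1} = eps,
   Delta^0 = id, Delta^{n+1} = (Delta (x) id^{(x)n}) o Delta^n *)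
Fixpoint iterD (n : nat) (a : C) : FT :=
  match n with
  | 0 => eps a *: tb [::]
  | 1 => tb [:: a]
  | m.+1 => lext (fun t : seq C =>
              lext (fun p : C * C => tb (p.1 :: p.2 :: behead t))
                   (Delta (head 0 t)))
            (iterD m a)
  end.

(* (a_1 .. a_m) o_i (b_1 .. b_n), i is 1-based as in the paper *)
Definition ocomp_basis (i : nat) (t s : seq C) : FT :=
  lext (fun u : seq C =>
          tb (take i.-1 t ++ [seq x.1 * x.2 | x <- zip u s] ++ drop i t))
       (iterD (size s) (nth 0 t i.-1)).

Definition ocomp (i : nat) (f g : FT) : FT :=
  lext (fun t : seq C => lext (fun s : seq C => ocomp_basis i t s) g) f.

Definition omu : FT := tb [:: 1; 1].

Definition odiff (n : nat) (f : FT) : FT :=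
  ocomp 2 omu f
  + \sum_(1 <= i < n.+1) (-1) ^+ i *: ocomp i f omu
  + (-1) ^+ n.+1 *: ocomp 1 omu f.

Definition ocircbar (m n : nat) (f g : FT) : FT :=
  (-1) ^+ ((m.-1) * (n.-1)) *:
    \sum_(1 <= i < m.+1) (-1) ^+ ((n.-1) * (i.-1)) *: ocomp i f g.

Definition obracket (m n : nat) (f g : FT) : FT :=
  ocircbar m n f g - (-1) ^+ ((m.-1) * (n.-1)) *: ocircbar n m g f.

Definition cocycle (n : nat) (f : FT) : Prop :=
  homog n f /\ teq (odiff n f) 0.

Definition cohomologous (n : nat) (f g : FT) : Prop :=
  exists h : FT, homog n.-1 h /\ teq (f - g) (odiff n.-1 h).

End Operad.
End Tensors.

(* Main.v *)
Require Import Defs.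
From HB Require Import structures.
From mathcomp Require Import all_boot all_algebra.
From mathcomp Require Import finmap monalg.
Import GRing.Theory.
Local Open Scope ring_scope.
Local Open Scope fset_scope.
Local Open Scope ring_scope.
Set Implicit Arguments.
Unset Strict Implicit.

Section Lext.
Variables (k : comRingType) (K : choiceType) (V : lmodType k).
Implicit Types (g : K -> V) (f : {malg k[K]}).

Lemma lextEw g f (d : {fset K}) : msupp f `<=` d ->
  lext g f = \sum_(t <- d) f@_t *: g t.
Proof.
move=> le; rewrite /lext [LHS](big_fset_incl _ le) => //= x xd /mcoeff_outdom ->.
by rewrite scale0r.
Qed.

Lemma lextD g f1 f2 : lext g (f1 + f2) = lext g f1 + lext g f2.
Proof.
rewrite !(@lextEw _ _ (msupp f1 `|` msupp f2)) ?fsubsetUl ?fsubsetUr ?msuppD_le //.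
by rewrite -big_split; apply: eq_bigr => t _; rewrite mcoeffD scalerDl.
Qed.

Lemma lextZ g (r : k) f : lext g (r *: f) = r *: lext g f.
Proof.
rewrite (@lextEw _ _ (msupp f)) ?msuppZ_le // /lext scaler_sumr.
by apply: eq_bigr => t _; rewrite mcoeffZ scalerA.
Qed.

Lemma lext0 g : lext g 0 = 0.
Proof. by rewrite /lext msupp0 big_seq_fset0. Qed.

Lemma lextB g f1 f2 : lext g (f1 - f2) = lext g f1 - lext g f2.
Proof. by rewrite lextD; have := lextZ g (-1) f2; rewrite !scaleN1r => ->. Qed.

Lemma lextU g (c : k) t : lext g << c *g t >> = c *: g t.
Proof. by rewrite (@lextEw _ _ [fset t]) ?msuppU_le // big_seq_fset1 mcoeffUU. Qed.

Lemma lext_tb g t : lext g << t >> = g t.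
Proof. by rewrite lextU scale1r. Qed.

Lemma lext_sum g (I : Type) (r : seq I) (F : I -> {malg k[K]}) :
  lext g (\sum_(i <- r) F i) = \sum_(i <- r) lext g (F i).
Proof.
elim: r => [|i r IH]; first by rewrite !big_nil lext0.
by rewrite !big_cons lextD IH.
Qed.

Lemma eq_lext_in g1 g2 f : {in msupp f, g1 =1 g2} -> lext g1 f = lext g2 f.
Proof. by move=> H; rewrite /lext; apply: eq_big_seq => t /H ->. Qed.

Lemma eq_lext g1 g2 f : g1 =1 g2 -> lext g1 f = lext g2 f.
Proof. by move=> H; apply: eq_lext_in => t _; apply: H. Qed.

Lemma lextPD g1 g2 f : lext (fun t => g1 t + g2 t) f = lext g1 f + lext g2 f.
Proof. by rewrite /lext -big_split; apply: eq_bigr => t _; rewrite scalerDr. Qed.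

Lemma lextPB g1 g2 f : lext (fun t => g1 t - g2 t) f = lext g1 f - lext g2 f.
Proof. by rewrite /lext -sumrB; apply: eq_bigr => t _; rewrite scalerBr. Qed.

Lemma lextP0 f : lext (fun _ => 0 : V) f = 0.
Proof. by rewrite /lext big1 // => t _; rewrite scaler0. Qed.

Lemma scaleU (c : k) t : c *: (<< t >> : {malg k[K]}) = << c *g t >>.
Proof.
apply/malgP => s; rewrite mcoeffZ !mcoeffU.
by case: (t == s); rewrite ?mulr1n ?mulr0n ?mulr1 ?mulr0.
Qed.

Lemma lext_id f : lext (fun t => << t >>) f = f.
Proof.
rewrite [RHS]monalgE /lext; apply: eq_bigr => t _; exact: scaleU.
Qed.
End Lext.

Lemma lext_lext (k : comRingType) (K K' : choiceType) (V : lmodType k)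
  (G : K' -> V) (g : K -> {malg k[K']}) (f : {malg k[K]}) :
  lext G (lext g f) = lext (fun t => lext G (g t)) f.
Proof. by rewrite [lext g f]/lext lext_sum; apply: eq_bigr => t _; rewrite lextZ. Qed.

Lemma lext_swap (k : comRingType) (K K' : choiceType) (V : lmodType k)
  (F : K -> K' -> V) (f : {malg k[K]}) (g : {malg k[K']}) :
  lext (fun t => lext (fun s => F t s) g) f = lext (fun s => lext (fun t => F t s) f) g.
Proof.
rewrite /lext; under eq_bigr do rewrite scaler_sumr.
rewrite exchange_big /=; apply: eq_bigr => s _; rewrite scaler_sumr.
by apply: eq_bigr => t _; rewrite !scalerA mulrC.
Qed.

Section Teq.
Variables (k : comRingType) (C : algType k).
Implicit Types (f g h : FT C).

Lemma tnullN f : tnull f -> tnull (- f).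
Proof. by move=> H; rewrite -scaleN1r; apply: tnullZ. Qed.

Lemma teq_refl f : teq f f.
Proof. by rewrite /teq subrr; apply: tnull0. Qed.

Lemma teq_sym f g : teq f g -> teq g f.
Proof. by rewrite /teq => /tnullN; rewrite opprB. Qed.

Lemma teq_trans f g h : teq f g -> teq g h -> teq f h.
Proof.
rewrite /teq => H1 H2; have := tnullD H1 H2.
by rewrite addrA subrK.
Qed.

Lemma teqD f1 f2 g1 g2 : teq f1 g1 -> teq f2 g2 -> teq (f1 + f2) (g1 + g2).
Proof.
rewrite /teq => H1 H2; have := tnullD H1 H2.
by rewrite opprD addrACA.
Qed.

Lemma teqZ (r : k) f g : teq f g -> teq (r *: f) (r *: g).
Proof. by rewrite /teq => H; rewrite -scalerBr; apply: tnullZ. Qed.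

Lemma teqN f g : teq f g -> teq (- f) (- g).
Proof. by move=> H; rewrite -!scaleN1r; apply: teqZ. Qed.

Lemma teqB f1 f2 g1 g2 : teq f1 g1 -> teq f2 g2 -> teq (f1 - f2) (g1 - g2).
Proof. by move=> H1 H2; apply: teqD => //; apply: teqN. Qed.

Lemma teq_eq f g : f = g -> teq f g.
Proof. by move=> ->; apply: teq_refl. Qed.

Definition tlin (F : C -> FT C) :=
  forall (r : k) (a b : C), teq (F (r *: a + b)) (r *: F a + F b).

Lemma tlin0 F : tlin F -> teq (F 0) 0.
Proof.
move=> H; have := H 1 0 0; rewrite scale1r addr0 /teq => H'.
move: H'; rewrite scale1r opprD addrA subrr sub0r => /tnullN; rewrite opprK.
by rewrite subr0.
Qed.

Lemma tlin_sum F (I : Type) (r : seq I) (c : I -> k) (a : I -> C) : tlin F ->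
  teq (F (\sum_(i <- r) c i *: a i)) (\sum_(i <- r) c i *: F (a i)).
Proof.
move=> H; elim: r => [|i r IH]; first by rewrite !big_nil; apply: tlin0.
rewrite !big_cons; apply: teq_trans (H _ _ _) _.
by apply: teqD => //; apply: teq_refl.
Qed.

Lemma tlin_tb (s1 s2 : seq C) : tlin (fun a => tb (s1 ++ a :: s2)).
Proof.
move=> r a b; apply: (@teq_trans _ (tb (s1 ++ (r *: a) :: s2) + tb (s1 ++ b :: s2))).
  by rewrite /teq opprD addrA; apply: tnull_add.
by apply: teqD; [apply: tnull_scale | apply: teq_refl].
Qed.

Lemma tlinD F G : tlin F -> tlin G -> tlin (fun a => F a + G a).
Proof.
move=> HF HG r a b; apply: teq_trans (teqD (HF r a b) (HG r a b)) _.
by apply: teq_eq; rewrite scalerDr addrACA.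
Qed.

Lemma tlinN F : tlin F -> tlin (fun a => - F a).
Proof.
move=> HF r a b; apply: teq_trans (teqN (HF r a b)) _.
by apply: teq_eq; rewrite opprD scalerN.
Qed.

Lemma tlinB F G : tlin F -> tlin G -> tlin (fun a => F a - G a).
Proof. by move=> HF HG; apply: tlinD => //; apply: tlinN. Qed.

Definition psi (t : seq C) : C := if size t == 1%N then head 0 t else 0.

Lemma psi_cat (s1 s2 : seq C) (a : C) :
  psi (s1 ++ a :: s2) = if s1 is [::] then (if s2 is [::] then a else 0) else 0.
Proof.
case: s1 => [|c s1]; first by case: s2.
by rewrite /psi /= size_cat addnS.
Qed.

Lemma tnull_psi f : tnull f -> lext psi f = 0.
Proof.
elim=> [s1 s2 a b|s1 s2 r a|||].
- rewrite /tb !lextB !lext_tb !psi_cat.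
  case: s1 => [|c s1]; last by rewrite !subr0.
  case: s2 => [|c s2]; last by rewrite !subr0.
  by rewrite [a + b]addrC addrK subrr.
- rewrite /tb (lextB psi) lextZ !lext_tb !psi_cat.
  case: s1 => [|c s1]; last by rewrite scaler0 subr0.
  case: s2 => [|c s2]; last by rewrite scaler0 subr0.
  by rewrite subrr.
- exact: lext0.
- by move=> f1 f2 _ H1 _ H2; rewrite lextD H1 H2 addr0.
- by move=> r f1 _ H1; rewrite lextZ H1 scaler0.
Qed.

Lemma size1E (t : seq C) : size t = 1%N -> t = [:: head 0 t].
Proof. by case: t => [|a [|]]. Qed.

Lemma size0E (t : seq C) : size t = 0%N -> t = [::].
Proof. by case: t. Qed.

Lemma homog_tb1 (x : C) : homog 1 (tb [:: x]).
Proof. by move=> t /(fsubsetP msuppU_le); rewrite in_fset1 => /eqP ->. Qed.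

Lemma homog0_0 : homog 0 (0 : FT C).
Proof. by move=> t; rewrite msupp0 in_fset0. Qed.

End Teq.

Lemma idt (V : zmodType) (A B E : V) : E - (B + A) = - (A - E + B).
Proof. by rewrite !opprD opprK addrA [- A + E]addrC addrAC. Qed.

Section Op.
Variables (k : comRingType) (C : algType k).
Variables (Delta : C -> {malg k[(C * C)%type]}) (eps : C -> k).
Implicit Types (f g h : FT C).

Local Notation ocomp := (ocomp Delta eps).
Local Notation odiff := (odiff Delta eps).
Local Notation omu := (@omu k C).

Lemma iterD2 (a : C) : Defs.iterD Delta eps 2 a = emb2 (Delta a).
Proof. by rewrite /= /tb lext_tb. Qed.

Lemma ocomp_tb i t s : ocomp i (tb t) (tb s) = ocomp_basis Delta eps i t s.
Proof. by rewrite /ocomp /tb !lext_tb. Qed.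

Lemma ocomp_l i f g : ocomp i f g = lext (fun t => ocomp i (tb t) g) f.
Proof. by rewrite {1}/ocomp; apply: eq_lext => t; rewrite /ocomp /tb lext_tb. Qed.

Lemma ocomp_r i f g : ocomp i f g = lext (fun s => ocomp i f (tb s)) g.
Proof.
rewrite {1}/ocomp lext_swap; apply: eq_lext => s; rewrite /ocomp.
by apply: eq_lext => t; rewrite /tb lext_tb.
Qed.

Lemma odiff1E f : odiff 1 f = ocomp 2 omu f - ocomp 1 f omu + ocomp 1 omu f.
Proof.
rewrite /odiff big_nat1 expr1 scaleN1r.
by rewrite -signr_odd /= expr0 scale1r.
Qed.

Lemma odiff0E f : odiff 0 f = ocomp 2 omu f - ocomp 1 omu f.
Proof. by rewrite /odiff big_geq // addr0 expr1 scaleN1r. Qed.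

Lemma ocb_xy (x y : C) : ocomp_basis Delta eps 1 [:: x] [:: y] = tb [:: x * y].
Proof. by rewrite /ocomp_basis /= /tb lext_tb. Qed.

Lemma ocb_x11 (x : C) : ocomp_basis Delta eps 1 [:: x] [:: 1; 1] = emb2 (Delta x).
Proof.
rewrite /ocomp_basis /= /tb lext_tb lext_lext /emb2; apply: eq_lext => p.
by rewrite /tb lext_tb /= !mulr1.
Qed.

Lemma ocb_2_11y (y : C) : ocomp_basis Delta eps 2 [:: 1; 1] [:: y] = tb [:: 1; y].
Proof. by rewrite /ocomp_basis /= /tb lext_tb /= mul1r. Qed.

Lemma ocb_1_11y (y : C) : ocomp_basis Delta eps 1 [:: 1; 1] [:: y] = tb [:: y; 1].
Proof. by rewrite /ocomp_basis /= /tb lext_tb /= mul1r. Qed.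

Lemma ocb_nil : ocomp_basis Delta eps 2 [:: 1; 1] [::] = ocomp_basis Delta eps 1 [:: 1; 1] [::].
Proof. by rewrite /ocomp_basis; apply: eq_lext => u; case: u. Qed.

Definition O1 (y : C) : FT C := tb [:: 1; y] - emb2 (Delta y) + tb [:: y; 1].

Lemma odiff1_tb (y : C) : odiff 1 (tb [:: y]) = O1 y.
Proof. by rewrite odiff1E /omu !ocomp_tb ocb_2_11y ocb_x11 ocb_1_11y. Qed.

Lemma odiff1_lext f : odiff 1 f = lext (fun t => odiff 1 (tb t)) f.
Proof.
rewrite odiff1E (ocomp_r 2 omu f) (ocomp_l 1 f omu) (ocomp_r 1 omu f).
rewrite -lextPB -lextPD; apply: eq_lext => t.
by rewrite odiff1E.
Qed.

Lemma odiff0_homog h : homog 0 h -> odiff 0 h = 0.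
Proof.
move=> Hh; rewrite odiff0E (ocomp_r 2) (ocomp_r 1) -lextPB.
rewrite (eq_lext_in (g2 := fun _ => 0)) ?lextP0 // => s /Hh /size0E ->.
by rewrite /omu !ocomp_tb ocb_nil subrr.
Qed.

Lemma O1_prim (x : C) : teq (O1 x) 0 <-> primitive Delta x.
Proof.
rewrite /teq /primitive /O1 subr0.
have E : emb2 (Delta x) - (tb [:: x; 1] + tb [:: 1; x]) =
   - (tb [:: 1; x] - emb2 (Delta x) + tb [:: x; 1]).
  exact: idt.
rewrite /teq E; split => [/tnullN|/tnullN]; by rewrite ?opprK.
Qed.

Lemma ocircbar11 f g : ocircbar Delta eps 1 1 f g = ocomp 1 f g.
Proof.
rewrite /ocircbar big_nat1.
have E : (-1 : k) ^+ (1.-1 * 1.-1) = 1 := expr0 _.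
by rewrite E !scale1r.
Qed.

Lemma obracket11 f g :
  obracket Delta eps 1 1 f g = ocomp 1 f g - ocomp 1 g f.
Proof.
have E : (-1 : k) ^+ (1.-1 * 1.-1) = 1 := expr0 _.
by rewrite /obracket !ocircbar11 E scale1r.
Qed.

End Op.

Theorem mainTheorem3 (k : comRingType) (C : algType k)
  (Delta : C -> {malg k[(C * C)%type]}) (eps : C -> k) :
  is_bialgebra Delta eps ->
  (forall (r : k) (x y : C),
      teq (tb [:: r *: x + y]) (r *: tb [:: x] + tb [:: y])) /\
  (forall x : C, cocycle Delta eps 1 (tb [:: x]) <-> primitive Delta x) /\
  (forall f : FT C, cocycle Delta eps 1 f ->
      exists x : C, primitive Delta x /\
                    cohomologous Delta eps 1 f (tb [:: x])) /\
  (forall x y : C, primitive Delta x -> primitive Delta y ->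
      cohomologous Delta eps 1 (tb [:: x]) (tb [:: y]) -> x = y) /\
  (forall x y : C, primitive Delta x -> primitive Delta y ->
      cohomologous Delta eps 1
        (obracket Delta eps 1 1 (tb [:: x]) (tb [:: y]))
        (tb [:: x * y - y * x])).
Proof.
move=> HB.
have tl1 : tlin (fun a : C => tb [:: a]) by exact: (tlin_tb [::] [::]).
have tlO : tlin (O1 Delta).
  apply: tlinD; last exact: (tlin_tb [::] [:: 1]).
  apply: tlinB; first exact: (tlin_tb [:: 1] [::]).
  by move=> r a b; apply: (Delta_linear HB).
split; first by move=> r x y; apply: tl1.
split.
  move=> x; rewrite /cocycle odiff1_tb -O1_prim; split; first by case.
  by move=> H; split => //; apply: homog_tb1.
split.
  move=> f [Hf Hd].
  have Ef : f = lext (fun t => tb [:: head 0 t]) f.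
    rewrite -[LHS]lext_id; apply: eq_lext_in => t /Hf /size1E {1}->.
    by [].
  exists (lext (fun t => head 0 t) f).
  have Hx : teq f (tb [:: lext (fun t => head 0 t) f]).
    rewrite {1}Ef /lext; apply: teq_sym; exact: (tlin_sum _ _ _ tl1).
  split.
    apply/(O1_prim Delta); apply: (teq_trans _ Hd).
    rewrite odiff1_lext (@eq_lext_in _ _ _ _ (fun t => O1 Delta (head 0 t))).
      by rewrite /lext; exact: (tlin_sum _ _ _ tlO).
    by move=> t /Hf /size1E ->; rewrite odiff1_tb.
  exists 0; split; first exact: homog0_0.
  by rewrite (@odiff0_homog _ _ Delta eps 0 (@homog0_0 k C)) /teq subr0.
split.
  move=> x y _ _ [h [Hh]]; rewrite odiff0_homog // /teq subr0 => /tnull_psi.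
  rewrite /tb lextB !lext_tb /psi /= => /eqP; rewrite subr_eq0 => /eqP.
  done.
move=> x y _ _; exists 0; split; first exact: homog0_0.
rewrite (@odiff0_homog _ _ Delta eps 0 (@homog0_0 k C)).
have -> : obracket Delta eps 1 1 (tb [:: x]) (tb [:: y]) = tb [:: x * y] - tb [:: y * x].
  by rewrite obracket11 !ocomp_tb !ocb_xy.
have H := tl1 (-1) (y * x) (x * y).
rewrite !scaleN1r [- (y * x) + _]addrC [- tb _ + _]addrC in H.
by rewrite /teq subr0; exact: teq_sym H.
Qed.
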